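(* Let $A$ be any $K$-algebra and suppose there are two short exact sequences of finite-dimensional $A$-modules $0\to x_2\to x\to x_1\to 0$ and $0\to x_1\to x\to x_3\to0$. Assume that $\operatorname{Ext}^1_A(x_1,x_1)=0$, $\dim\operatorname{Hom}_A(x_1,x_2)=\dim\operatorname{Hom}_A(x_1,x_3)$ and $\dim\operatorname{Hom}_A(x_2,x_1)=\dim\operatorname{Hom}_A(x_3,x_1)$. Then both short exact sequences split (and hence $x_3\simeq x_2$).
   Context: $K$ is a field (algebraically closed in the paper's setting). *)

(* Defs.v *)
From HB Require Import structures.
From mathcomp Require Import all_boot all_order all_algebra.
Set Implicit Arguments. Unset Strict Implicit. Unset Printing Implicit Defensive.
Import GRing.Theory.
Local Open Scope ring_scope.

(* A finite-dimensional (left) A-module, for A a K-algebra: a K-vector space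
   K^dim (column vectors 'cV_dim) with a K-algebra morphism A -> End_K(K^dim),
   given as matrices acting on column vectors. *)
Record fdmod (K : fieldType) (A : algType K) := FDMod {
  mdim : nat;
  act : A -> 'M[K]_mdim;
  act_linear : forall (k : K) (a b : A), act (k *: a + b) = k *: act a + act b;
  act_mul : forall a b : A, act (a * b) = act a *m act b;
  act_one : act 1 = 1%:M
}.

Section Defs.
Variables (K : fieldType) (A : algType K).

Definition is_hom (X Y : fdmod A) (h : 'M[K]_(mdim Y, mdim X)) : Prop :=
  forall a : A, h *m act X a = act Y a *m h.

(* dim_K Hom_A(X, Y) = d : the homomorphisms form the row space of a
   row-free matrix (a basis) with d rows, via the vectorization mxvec. *)
Definition HomDim (X Y : fdmod A) (d : nat) : Prop :=
  exists F : 'M[K]_(d, mdim Y * mdim X),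
    row_free F /\
    forall h : 'M[K]_(mdim Y, mdim X), is_hom h <-> (mxvec h <= F)%MS.

Definition ses (X Y Z : fdmod A)
    (f : 'M[K]_(mdim Y, mdim X)) (g : 'M[K]_(mdim Z, mdim Y)) : Prop :=
  [/\ is_hom f, is_hom g,
      (forall u : 'cV[K]_(mdim X), f *m u = 0 -> u = 0),
      (forall v : 'cV[K]_(mdim Y), g *m v = 0 <-> exists u, v = f *m u)
    & (forall w : 'cV[K]_(mdim Z), exists v, g *m v = w)].

Definition ses_splits (X Y Z : fdmod A)
    (f : 'M[K]_(mdim Y, mdim X)) (g : 'M[K]_(mdim Z, mdim Y)) : Prop :=
  exists s : 'M[K]_(mdim Y, mdim Z), is_hom s /\ g *m s = 1%:M.

(* Ext^1_A(X, Z) = 0 (Yoneda): every extension 0 -> Z -> Y -> X -> 0 splits. *)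
Definition Ext1_zero (X Z : fdmod A) : Prop :=
  forall (Y : fdmod A) (f : 'M[K]_(mdim Y, mdim Z)) (g : 'M[K]_(mdim X, mdim Y)),
    ses f g -> ses_splits f g.

Definition mod_iso (X Y : fdmod A) : Prop :=
  exists (h : 'M[K]_(mdim Y, mdim X)) (k : 'M[K]_(mdim X, mdim Y)),
    [/\ is_hom h, is_hom k, h *m k = 1%:M & k *m h = 1%:M].

End Defs.

(* Main.v *)
Require Import Defs.
From mathcomp Require Import all_boot all_order all_algebra.
From mathcomp Require Import ring.
From mathcomp Require Import zify.
From Stdlib Require Import Classical.
Set Implicit Arguments. Unset Strict Implicit. Unset Printing Implicit Defensive.
Import GRing.Theory.
Local Open Scope ring_scope.

Section Fit.
Variable K : fieldType.

Lemma fitting n (s e : 'M[K]_n) :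
  e * e = e -> e * s = s -> s * e = s ->
  exists eps w m : 'M[K]_n,
   [/\ eps * eps = eps, e * eps = eps, eps * e = eps, w * s = eps & eps * w = w] /\
       (e - eps) * m * (e - s) = e - eps
     /\ forall c, c * s = s * c -> [/\ c * eps = eps * c, c * w = w * c & c * m = m * c].
Proof.
case: n s e => [|n] s e He Hes Hse.
  exists 0, 0, 0; split; [split|split]; try move=> *; try split; by apply/matrixP=> i; case: i.
pose chi := char_poly s.
have nz : chi != 0 by apply: monic_neq0; apply: char_poly_monic.
case: (multiplicity_XsubC chi 0) => m0 [q]; rewrite nz /= => Hq.
rewrite polyC0 subr0 => Dchi.
have cop : coprimep ('X ^+ m0.+1) q.
  by apply: coprimep_expl; rewrite coprimep_sym coprimepX.
case/Bezout_eq1_coprimepP: cop => [[u1 u2]] /= Hb.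
have HC : horner_mx s chi = 0 by apply: Cayley_Hamilton.
have hmX : horner_mx s 'X = s by apply: horner_mx_X.
have comm_hm : forall c, c * s = s * c -> forall p : {poly K}, c * horner_mx s p = horner_mx s p * c.
  move=> c Hc p; have H := @comm_mx_horner _ _ c s p; rewrite /comm_mx in H.
  rewrite -!mulmxE; apply: H; by rewrite !mulmxE.
have hmC : forall p r, horner_mx s p * horner_mx s r = horner_mx s r * horner_mx s p.
  by move=> p r; rewrite -!rmorphM mulrC.
pose eps := horner_mx s (u1 * 'X ^+ m0.+1).
pose w := horner_mx s (u1 * 'X ^+ m0 * (u1 * 'X ^+ m0.+1)).
pose m := horner_mx s (\sum_(i < m0.+1) 'X ^+ i).
have E1 : (u1 * 'X ^+ m0.+1) * (u1 * 'X ^+ m0.+1) = u1 * 'X ^+ m0.+1 - (u1*u2*'X) * chi.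
  have -> : u1 * 'X ^+ m0.+1 * (u1 * 'X ^+ m0.+1) =
     u1 * 'X ^+ m0.+1 * (u1 * 'X ^+ m0.+1 + u2 * q) - (u1*u2*'X) * (q * 'X ^+ m0)
    by rewrite exprS; ring.
  by rewrite Hb mulr1 Dchi.
have epsK : eps * eps = eps.
  by rewrite /eps -rmorphM E1 rmorphB /= [horner_mx s (_ * chi)]rmorphM /= HC mulr0 subr0.
have epsE : eps = horner_mx s (u1 * 'X ^+ m0) * s.
  by rewrite /eps exprSr mulrA rmorphM /= hmX.
have epsE' : eps = s * horner_mx s (u1 * 'X ^+ m0).
  by rewrite epsE -comm_hm.
have E2 : 'X ^+ m0.+1 - u1 * 'X ^+ m0.+1 * 'X ^+ m0.+1 = (u2 * 'X) * chi.
  have -> : 'X ^+ m0.+1 - u1 * 'X ^+ m0.+1 * 'X ^+ m0.+1 =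
     'X ^+ m0.+1 * (1 - (u1 * 'X ^+ m0.+1 + u2 * q)) + (u2 * 'X) * (q * 'X ^+ m0)
    by rewrite exprS; ring.
  by rewrite Hb subrr mulr0 add0r Dchi.
have sN : s ^+ m0.+1 - eps * s ^+ m0.+1 = 0.
  have := congr1 (horner_mx s) E2.
  by rewrite rmorphM /= HC mulr0 rmorphB rmorphM rmorphXn /= hmX.
have esN : e * s ^+ m0.+1 = s ^+ m0.+1 by rewrite exprS mulrA Hes.
have Hm : m * (1 - s) = 1 - s ^+ m0.+1.
  have P : (\sum_(i < m0.+1) 'X ^+ i) * (1 - 'X) = 1 - 'X ^+ m0.+1 :> {poly K}.
    have := subrXX (1 : {poly K}) 'X m0.+1.
    rewrite expr1n => ->; rewrite mulrC; congr (_ * _).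
    by apply: eq_bigr => i _; rewrite expr1n mul1r.
  have := congr1 (horner_mx s) P.
  by rewrite rmorphM rmorphB rmorph1 rmorphB rmorph1 rmorphXn /= hmX.
have ce : e * s = s * e by rewrite Hes Hse.
have eeps : e * eps = eps by rewrite epsE' mulrA Hes.
have epse : eps * e = eps by rewrite epsE -mulrA Hse.
exists eps, w, m; split; [split|split].
- exact: epsK.
- exact: eeps.
- exact: epse.
- have -> : w * s = horner_mx s ((u1 * 'X ^+ m0.+1) * (u1 * 'X ^+ m0.+1)).
    by rewrite -{1}hmX /w -rmorphM; congr (horner_mx s _); rewrite exprS; ring.
  by rewrite rmorphM -/eps epsK.
- have -> : eps * w = horner_mx s (u1 * 'X ^+ m0) * (eps * eps).
    by rewrite /w /eps -!rmorphM; congr (horner_mx s _); ring.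
  by rewrite epsK /w [RHS]rmorphM.
- have h1 : (e - eps) * (e - s) = (e - eps) * (1 - s).
    by rewrite !mulrBr !mulrBl He Hes epse !mulr1.
  have me : m * e = e * m by rewrite (comm_hm e ce).
  have meps : m * eps = eps * m by apply: hmC.
  have cm : (e - eps) * m = m * (e - eps) by rewrite mulrBl mulrBr me meps.
  rewrite cm -mulrA h1 mulrA -cm -mulrA Hm.
  by rewrite mulrBr mulr1 mulrBl esN sN subr0.
- move=> c Hc; split; exact: comm_hm.
Qed.
End Fit.

Section IC.
Variables (K : fieldType) (n : nat) (S : 'M[K]_n -> Prop).
Implicit Types x y z e : 'M[K]_n.

Definition hom x := forall c, S c -> x * c = c * x.
Lemma homD x y : hom x -> hom y -> hom (x + y).
Proof. by move=> hx hy c Sc; rewrite mulrDl mulrDr hx ?hy. Qed.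
Lemma homN x : hom x -> hom (- x).
Proof. by move=> hx c Sc; rewrite mulNr mulrN hx. Qed.
Lemma homB x y : hom x -> hom y -> hom (x - y).
Proof. by move=> hx hy; apply: homD => //; apply: homN. Qed.
Lemma homM x y : hom x -> hom y -> hom (x * y).
Proof. by move=> hx hy c Sc; rewrite -mulrA hy // mulrA hx // mulrA. Qed.
Arguments homD {x y}. Arguments homN {x}. Arguments homB {x y}. Arguments homM {x y}.
Lemma hom0 : hom 0. Proof. by move=> c _; rewrite mul0r mulr0. Qed.
Lemma hom1 : hom 1. Proof. by move=> c _; rewrite mul1r mulr1. Qed.

Lemma extr x y z : x * y = z -> forall w, w * x * y = w * z.
Proof. by move=> H w; rewrite -mulrA H. Qed.
Arguments extr {x y z}.

Ltac zsolve := apply/matrixP=> ? ?; rewrite !mxE; ring.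

Lemma corner_inv e a v : e * e = e -> a * e = a -> e * a = a -> v * e = v -> e * v = v ->
  v * a = e -> a * v = e.
Proof.
move=> He ae ea ve ev va.
have H : (v + (1 - e)) * (a + (1 - e)) = 1.
  rewrite !mulrDl !mulrDr !mulrN !mulNr !mulr1 !mul1r va ve ea He; zsolve.
have := mulmx1C (A := v + (1 - e)) (B := a + (1 - e)); rewrite !mulmxE => /(_ H).
rewrite !mulrDl !mulrDr !mulrN !mulNr !mulr1 !mul1r ae ev He => H2.
apply/eqP; rewrite -subr_eq0; match type of H2 with ?L = _ =>
  have <- : L - 1 = a * v - e by zsolve end.
by rewrite H2 subrr.
Qed.


Definition orth e1 e2 := [/\ e1 * e1 = e1, e2 * e2 = e2, e1 * e2 = 0 & e2 * e1 = 0].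
Definition equiv x y := exists al be, [/\ hom al, hom be, y * al = al, al * x = al & x * be = be]
   /\ [/\ be * y = be, be * al = x & al * be = y].

Lemma IC_step e1 e2 f1 f3 :
 (forall e1' e2' f1' f3', (\rank e1' < \rank e1)%N -> hom e1' -> hom e2' -> hom f1' -> hom f3' ->
    orth e1' e2' -> orth f1' f3' -> e1' + e2' = f1' + f3' -> equiv e1' f1' -> equiv e2' f3') ->
 hom e1 -> hom e2 -> hom f1 -> hom f3 -> orth e1 e2 -> orth f1 f3 -> e1 + e2 = f1 + f3 ->
 equiv e1 f1 -> equiv e2 f3.
Proof.
move=> IH he1 he2 hf1 hf3 [e11 e22 e12 e21] [f11 f33 f13 f31] EE
  [al [be [[hal hbe f1al ale1 e1be] [bef1 beal albe]]]].
set E := e1 + e2 in EE *.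
have hE : hom E by apply: homD.
have e1E : e1 * E = e1 by rewrite mulrDr e11 e12 addr0.
have Ee1 : E * e1 = e1 by rewrite mulrDl e11 e21 addr0.
have e2E : e2 * E = e2 by rewrite mulrDr e22 e21 add0r.
have Ee2 : E * e2 = e2 by rewrite mulrDl e22 e12 add0r.
have f1E : f1 * E = f1 by rewrite EE mulrDr f11 f13 addr0.
have Ef1 : E * f1 = f1 by rewrite EE mulrDl f11 f31 addr0.
have f3E : f3 * E = f3 by rewrite EE mulrDr f33 f31 add0r.
have Ef3 : E * f3 = f3 by rewrite EE mulrDl f33 f13 add0r.
have EEE : E * E = E by rewrite {1}/E mulrDl e1E e2E.
have De2 : e2 = E - e1 by rewrite /E [e1 + e2]addrC addrK.
have Df3 : f3 = E - f1 by rewrite EE [f1 + f3]addrC addrK.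
have [s Ds] : exists s, s = e1 * f1 * e1 by eexists.
have hs : hom s by rewrite Ds; apply: homM => //; apply: homM.
have e1s : e1 * s = s by rewrite Ds !mulrA e11.
have se1 : s * e1 = s by rewrite Ds -mulrA e11.
have [eps [w [m [[epsK e1eps epse1 ws epsw] [Hm Hc]]]]] := @fitting _ _ s e1 e11 e1s se1.
have cS : forall c, S c -> c * s = s * c by move=> c Sc; rewrite hs.
have heps : hom eps by move=> c Sc; have [] := Hc c (cS c Sc).
have hw : hom w by move=> c Sc; have [] := Hc c (cS c Sc).
have hm : hom m by move=> c Sc; have [] := Hc c (cS c Sc).
have me1 : m * e1 = e1 * m by have [] := Hc e1 (etrans e1s (esym se1)).
have [a Da] : exists a, a = be * e1 by eexists.
have [a' Da'] : exists a', a' = e1 * al by eexists.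
have ha : hom a by rewrite Da; apply: homM.
have ha' : hom a' by rewrite Da'; apply: homM.
have a'a : a' * a = s by rewrite Da' Da Ds mulrA -(mulrA e1 al be) albe.
have e1a : e1 * a = a by rewrite Da mulrA e1be.
have ae1 : a * e1 = a by rewrite Da -mulrA e11.
have a'e1 : a' * e1 = a' by rewrite Da' -mulrA ale1.
have e1a' : e1 * a' = a' by rewrite Da' mulrA e11.
have e1w : e1 * w = w by rewrite -epsw mulrA e1eps.
have [p Dp] : exists p, p = a * w * a' by eexists.
have hp : hom p by rewrite Dp; apply: homM => //; apply: homM.
have xa'a := extr a'a. have xws := extr ws. have xepsw := extr epsw. have xepsK := extr epsK.
have pp : p * p = p by rewrite Dp !mulrA xa'a xws xepsw.
have e1p : e1 * p = p by rewrite Dp !mulrA e1a.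
have pe1 : p * e1 = p by rewrite Dp -mulrA a'e1.
have Hhk : exists h0 k0, [/\ hom h0, hom k0, (e1 - p) * h0 = h0, h0 * (e1 - eps) = h0
     & (e1 - eps) * k0 = k0] /\ (k0 * (e1 - p) = k0 /\ k0 * h0 = e1 - eps).
  case: (eqVneq eps e1) => [-> | neq].
    by exists 0, 0; rewrite subrr; split; [split|split]; rewrite ?mulr0 ?mul0r //; exact: hom0.
  have lt : (\rank eps < \rank e1)%N.
    apply: rank_ltmx; rewrite ltmxE; apply/andP; split.
      by rewrite -[X in (X <= _)%MS]epse1 -mulmxE submxMl.
    apply/negP => /submxP [D HD].
    have : e1 * eps = e1 by rewrite {1}HD -mulmxE -mulmxA mulmxE epsK -mulmxE -HD.
    by rewrite e1eps => /eqP; rewrite (negbTE neq).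
  have oe : orth eps (e1 - eps).
    split => //; rewrite ?mulrBl ?mulrBr ?e11 ?e1eps ?epse1 ?epsK ?subrr ?subr0 //.
  have op : orth p (e1 - p).
    split => //; rewrite ?mulrBl ?mulrBr ?e11 ?e1p ?pe1 ?pp ?subrr ?subr0 //.
  have sm : eps + (e1 - eps) = p + (e1 - p) by rewrite [LHS]addrC [RHS]addrC !subrK.
  have eq : equiv eps p.
    exists (a * eps), (w * a'); split; split.
    - exact: homM.
    - exact: homM.
    - by rewrite Dp !mulrA xa'a xws xepsK.
    - by rewrite -mulrA epsK.
    - by rewrite mulrA epsw.
    - by rewrite Dp !mulrA xa'a ws epsw.
    - by rewrite !mulrA xa'a ws epsK.
    - by rewrite !mulrA xepsw Dp.
  have [h0 [k0 [[hh0 hk0 ph0 h0e e0k0] [k0p k0h0 _]]]] :=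
    IH eps (e1 - eps) p (e1 - p) lt heps (homB he1 heps) hp (homB he1 hp) oe op sm eq.
  by exists h0, k0.
have [h0 [k0 [[hh0 hk0 ph0 h0e e0k0] [k0p k0h0]]]] := Hhk.
have e1e : (e1 - eps) * e1 = e1 - eps by rewrite mulrBl e11 epse1.
have [y Dy] : exists y, y = (h0 - a) * (e1 - eps) * m by eexists.
have hy : hom y by rewrite Dy; apply: homM => //; apply: homM; apply: homB.
have ye1 : y * e1 = y by rewrite Dy -mulrA me1 mulrA (extr e1e).
have t : e1 * f3 * e1 = e1 - s by rewrite Df3 mulrBr mulrBl e1E e11 Ds.
have yf3e1 : y * f3 * e1 = (h0 - a) * (e1 - eps).
  by rewrite -ye1 -!mulrA (mulrA e1 f3 e1) t Dy -(mulrA (h0 - a)) -(mulrA (h0 - a)) Hm.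
have e1h0 : e1 * h0 = h0 by rewrite -ph0 mulrA mulrBr e11 e1p.
have h0e1 : h0 * e1 = h0 by rewrite -h0e -mulrA e1e.
have e1k0 : e1 * k0 = k0 by rewrite -e0k0 mulrA mulrBr e11 e1eps.
have k0e1 : k0 * e1 = k0 by rewrite -k0p -mulrA mulrBl e11 pe1.
have e1y : e1 * y = y by rewrite Dy !mulrA (mulrBr e1) e1h0 e1a.
have [a1 Da1] : exists a1, a1 = a * eps + h0 by eexists.
have [pi Dpi] : exists pi, pi = be + y * f3 by eexists.
have hpi : hom pi by rewrite Dpi; apply: homD => //; apply: homM.
have pie1 : pi * e1 = a1.
  rewrite Dpi mulrDl -Da yf3e1 Da1 mulrBl h0e mulrBr ae1; zsolve.
have [g Dg] : exists g, g = w * a' + k0 by eexists.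
have hg : hom g by rewrite Dg; apply: homD => //; apply: homM.
have wa'p : w * a' * (e1 - p) = 0.
  by rewrite mulrBr -(mulrA w a' e1) a'e1 Dp !mulrA xa'a ws epsw subrr.
have pa : (e1 - p) * (a * eps) = 0.
  by rewrite mulrBl !mulrA e1a Dp xa'a xws xepsK subrr.
have wa'h0 : w * a' * h0 = 0 by rewrite -ph0 mulrA wa'p mul0r.
have k0a : k0 * (a * eps) = 0 by rewrite -k0p -mulrA pa mulr0.
have ga1 : g * a1 = e1.
  rewrite Dg Da1 mulrDl !mulrDr wa'h0 k0a k0h0 !mulrA xa'a ws epsK; zsolve.
have e1g : e1 * g = g by rewrite Dg mulrDr mulrA e1w e1k0.
have ge1 : g * e1 = g by rewrite Dg mulrDl -mulrA a'e1 k0e1.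
have e1a1 : e1 * a1 = a1 by rewrite Da1 mulrDr mulrA e1a e1h0.
have a1e1 : a1 * e1 = a1 by rewrite Da1 mulrDl -mulrA epse1 h0e1.
have a1g : a1 * g = e1 := @corner_inv e1 a1 g e11 a1e1 e1a1 ge1 e1g ga1.
have pig : pi * g = e1 by rewrite -e1g mulrA pie1 a1g.
have f3al : f3 * al = 0 by rewrite -f1al mulrA f31 mul0r.
have pial : pi * al = e1 by rewrite Dpi mulrDl beal -mulrA f3al mulr0 addr0.
have beE : be * E = be by rewrite -{1}bef1 -mulrA f1E bef1.
have piE : pi * E = pi by rewrite Dpi mulrDl beE -mulrA f3E.
have pif1 : pi * f1 = be by rewrite Dpi mulrDl bef1 -mulrA f31 mulr0 addr0.
have e1pi : e1 * pi = pi by rewrite Dpi mulrDr e1be mulrA e1y.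
have Eg : E * g = g by rewrite -e1g mulrA Ee1.
have Eal : E * al = al by rewrite -f1al mulrA Ef1.
have e2g : e2 * g = 0 by rewrite -e1g mulrA e21 mul0r.
have [Q DQ] : exists Q, Q = E - g * pi by eexists.
have [Q' DQ'] : exists Q', Q' = E - al * pi by eexists.
have hQ : hom Q by rewrite DQ; apply: homB => //; apply: homM.
have hQ' : hom Q' by rewrite DQ'; apply: homB => //; apply: homM.
have Qe1 : Q * e1 = 0 by rewrite DQ mulrBl Ee1 -mulrA pie1 ga1 subrr.
have QE : Q * E = Q by rewrite DQ mulrBl EEE -mulrA piE.
have Qe2 : Q * e2 = Q by rewrite De2 mulrBr QE Qe1 subr0.
have Q'E : Q' * E = Q' by rewrite DQ' mulrBl EEE -mulrA piE.
have Q'f1 : Q' * f1 = 0 by rewrite DQ' mulrBl Ef1 -mulrA pif1 albe subrr.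
have Q'f3 : Q' * f3 = Q' by rewrite Df3 mulrBr Q'E Q'f1 subr0.
have EQ : E * Q = Q by rewrite DQ mulrBr EEE mulrA Eg.
have EQ' : E * Q' = Q' by rewrite DQ' mulrBr EEE mulrA Eal.
have piQ : pi * Q = 0 by rewrite DQ mulrBr piE mulrA pig e1pi subrr.
have piQ' : pi * Q' = 0 by rewrite DQ' mulrBr piE mulrA pial e1pi subrr.
have Q'Q : Q' * Q = Q by rewrite {1}DQ' mulrBl EQ -mulrA piQ mulr0 subr0.
have QQ' : Q * Q' = Q' by rewrite {1}DQ mulrBl EQ' -mulrA piQ' mulr0 subr0.
exists (f3 * Q * e2), (e2 * Q' * f3); split; split.
- by apply: homM => //; apply: homM.
- by apply: homM => //; apply: homM.
- by rewrite !mulrA f33.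
- by rewrite -mulrA e22.
- by rewrite !mulrA e22.
- by rewrite -mulrA f33.
- rewrite !mulrA (extr f33) (extr Q'f3) (extr Q'Q) DQ mulrBr mulrBl e2E e22 mulrA e2g.
  by rewrite !mul0r subr0.
- rewrite !mulrA (extr e22) (extr Qe2) (extr QQ') DQ' mulrBr mulrBl f3E f33 mulrA f3al.
  by rewrite !mul0r subr0.
Qed.

Lemma IC r e1 e2 f1 f3 : (\rank e1 <= r)%N ->
 hom e1 -> hom e2 -> hom f1 -> hom f3 -> orth e1 e2 -> orth f1 f3 -> e1 + e2 = f1 + f3 ->
 equiv e1 f1 -> equiv e2 f3.
Proof.
elim: r e1 e2 f1 f3 => [|r IHr] e1 e2 f1 f3 Hr; apply: IC_step => e1' e2' f1' f3' lt.
  by move: (leq_trans lt Hr).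
by apply: IHr; rewrite -ltnS (leq_trans lt Hr).
Qed.
End IC.

Section Mods.
Variables (K : fieldType) (A : algType K).

Lemma colsP0 p k (M : 'M[K]_(p, k)) : (forall j, col j M = 0) -> M = 0.
Proof.
move=> H; apply/matrixP => i j; have := congr1 (fun N : 'M[K]_(p, 1) => N i 0) (H j).
by rewrite !mxE.
Qed.

Lemma colMx p q r j (B : 'M[K]_(p, q)) (C : 'M[K]_(q, r)) : col j (B *m C) = B *m col j C.
Proof. by rewrite !colE mulmxA. Qed.

Lemma cols_exist p q k (B : 'M[K]_(q, k)) (f : 'M[K]_(q, p)) :
  (forall j, exists v, f *m v = col j B) -> exists D, f *m D = B.
Proof.
move=> H; have [U HU] := fin_all_exists H.
exists (\matrix_(i, j) U j i 0); apply/matrixP => i j.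
have := congr1 (fun N : 'M[K]_(q, 1) => N i 0) (HU j); rewrite !mxE => <-.
by apply: eq_bigr => l _; rewrite !mxE.
Qed.

Lemma ses_lin (X Y Z : fdmod A) (f : 'M[K]_(mdim Y, mdim X)) (g : 'M[K]_(mdim Z, mdim Y)) :
  ses f g -> exists (sg : 'M[K]_(mdim Y, mdim Z)) (rh : 'M[K]_(mdim X, mdim Y)),
   [/\ g *m sg = 1%:M, rh *m f = 1%:M, f *m rh + sg *m g = 1%:M & g *m f = 0].
Proof.
case=> hf hg finj fex gsur.
have gf : g *m f = 0.
  apply: colsP0 => j; rewrite colMx -[f]mulmx1 colMx.
  by apply/(fex _).2; eexists.
have [sg Hs] : exists sg, g *m sg = 1%:M.
  by apply: cols_exist => j; apply: gsur.
have gB : g *m (1%:M - sg *m g) = 0 by rewrite mulmxBr mulmx1 mulmxA Hs mul1mx subrr.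
have [rh Hr] : exists rh, f *m rh = 1%:M - sg *m g.
  apply: cols_exist => j.
  have : g *m col j (1%:M - sg *m g) = 0 by rewrite -colMx gB col0.
  by move/fex => [u ->]; exists u.
exists sg, rh; split => //.
- apply/eqP; rewrite -subr_eq0; apply/eqP; apply: colsP0 => j; apply: finj.
  by rewrite -colMx mulmxBr mulmxA Hr mulmxBl mul1mx -mulmxA gf mulmx0 subr0 mulmx1 subrr col0.
- by rewrite Hr subrK.
Qed.

Lemma ext_cocycle (X : fdmod A) (c : A -> 'M[K]_(mdim X)) :
  Ext1_zero X X ->
  (forall k a b, c (k *: a + b) = k *: c a + c b) ->
  (forall a b, c (a * b) = act X a *m c b + c a *m act X b) ->
  exists m, forall a, act X a *m m + c a = m *m act X a.
Proof.
move=> Hext clin cmul.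
have c1 : c 1 = 0.
  have := cmul 1 1; rewrite mulr1 act_one mul1mx mulmx1 -[LHS]add0r => /addIr.
  by move=> <-.
pose actE := fun a => block_mx (act X a) (c a) 0 (act X a) : 'M[K]_(mdim X + mdim X).
have linE : forall k a b, actE (k *: a + b) = k *: actE a + actE b.
  by move=> k a b; rewrite /actE act_linear clin scale_block_mx add_block_mx scaler0 addr0.
have mulE : forall a b, actE (a * b) = actE a *m actE b.
  by move=> a b; rewrite /actE mulmx_block act_mul cmul !mulmx0 !mul0mx !addr0 !add0r.
have oneE : actE 1 = 1%:M by rewrite /actE act_one c1 -scalar_mx_block.
pose E := @FDMod K A (mdim X + mdim X) actE linE mulE oneE.
pose f := col_mx (1%:M : 'M[K]_(mdim X)) 0 : 'M[K]_(mdim X + mdim X, mdim X).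
pose g := row_mx 0 (1%:M : 'M[K]_(mdim X)) : 'M[K]_(mdim X, mdim X + mdim X).
have sesE : @ses K A X E X f g.
  split.
  - move=> a; rewrite /f /= /actE mul_col_mx mul_block_col.
    by rewrite mul1mx !mul0mx mulmx1 !mulmx0 !addr0.
  - move=> a; rewrite /g /= /actE mul_row_block mul_mx_row.
    by rewrite !mul0mx !mulmx0 mul1mx mulmx1 !add0r.
  - by move=> u; rewrite /f mul_col_mx mul1mx mul0mx -col_mx0 => /eq_col_mx [].
  - move=> v; split.
    + move=> Hv; exists (usubmx v); rewrite /f mul_col_mx mul1mx mul0mx.
      move: Hv; rewrite /g -[v]vsubmxK mul_row_col mul0mx mul1mx add0r => ->.
      by rewrite col_mxKu.
    + by move=> [u ->]; rewrite /g /f mul_col_mx mul_row_col !mul0mx mul1mx addr0.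
  - by move=> w; exists (col_mx 0 w); rewrite /g mul_row_col mul0mx mul1mx add0r.
have [s [hs gs]] := Hext E f g sesE.
have s2 : dsubmx s = 1%:M.
  by move: gs; rewrite -[s]vsubmxK /g mul_row_col mul0mx mul1mx add0r col_mxKd.
exists (usubmx s) => a.
have := hs a; rewrite -[s]vsubmxK /= /actE mul_col_mx mul_block_col => /eq_col_mx [].
by rewrite col_mxKu s2 mulmx1 => ->.
Qed.

Lemma extm p q r t (x : 'M[K]_(p, q)) (y : 'M[K]_(q, r)) (z : 'M[K]_(p, r)) :
  x *m y = z -> forall w : 'M[K]_(t, p), w *m x *m y = w *m z.
Proof. by move=> H w; rewrite -mulmxA H. Qed.

Lemma extm3 p q r t u (x : 'M[K]_(p, q)) (y : 'M[K]_(q, r)) (z : 'M[K]_(r, u)) (d : 'M[K]_(p, u)) :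
  x *m (y *m z) = d -> forall w : 'M[K]_(t, p), w *m x *m y *m z = w *m d.
Proof. by move=> H w; rewrite -H !mulmxA. Qed.

Ltac zs := apply/matrixP=> ? ?; rewrite !mxE; ring.

Lemma pull (X1 X X3 : fdmod A) (f : 'M[K]_(mdim X, mdim X1)) (g : 'M[K]_(mdim X3, mdim X)) :
  ses f g -> Ext1_zero X1 X1 -> forall h : 'M[K]_(mdim X3, mdim X1), is_hom h ->
  exists l : 'M[K]_(mdim X, mdim X1), is_hom l /\ g *m l = h.
Proof.
move=> Hs Hext h hh.
have [hf hg _ _ _] := Hs.
have [sg [rh [gs rf spl gf]]] := ses_lin Hs.
pose c := fun a => rh *m act X a *m sg *m h.
have E1 : forall a, rh *m act X a *m f = act X1 a by move=> a; rewrite -mulmxA -hf mulmxA rf mul1mx.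
have E2 : forall b, g *m act X b *m sg = act X3 b by move=> b; rewrite hg -mulmxA gs mulmx1.
have E2x : forall t (w : 'M[K]_(t, mdim X3)) b, w *m g *m act X b *m sg = w *m act X3 b.
  by move=> t w b; rewrite -(E2 b) !mulmxA.
have clin : forall k a b, c (k *: a + b) = k *: c a + c b.
  by move=> k a b; rewrite /c act_linear mulmxDr -scalemxAr !mulmxDl -!scalemxAl.
have cmul : forall a b, c (a * b) = act X1 a *m c b + c a *m act X1 b.
  move=> a b; rewrite /c act_mul.
  have -> : act X a *m act X b = act X a *m (f *m rh + sg *m g) *m act X b by rewrite spl mulmx1.
  rewrite mulmxDr mulmxDl !mulmxDr !mulmxDl !mulmxA E1 E2x -!mulmxA hh.
  by rewrite !mulmxA.
have [m Hm] := ext_cocycle Hext clin cmul.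
exists (sg *m h + f *m m); split; last by rewrite mulmxDr !mulmxA gs gf mul1mx mul0mx addr0.
move=> a.
have T1 : act X a *m sg = f *m (rh *m act X a *m sg) + sg *m act X3 a.
  by rewrite -E2 -[act X a *m sg]mul1mx -spl mulmxDl !mulmxA.
rewrite mulmxDl mulmxDr mulmxA T1 (mulmxA (act X a)) -hf -!(mulmxA f) -Hm /c.
rewrite !mulmxDl !mulmxDr !mulmxA -(mulmxA sg h) hh !mulmxA; zs.
Qed.

Lemma push (X2 X X1 : fdmod A) (f : 'M[K]_(mdim X, mdim X2)) (g : 'M[K]_(mdim X1, mdim X)) :
  ses f g -> Ext1_zero X1 X1 -> forall h : 'M[K]_(mdim X1, mdim X2), is_hom h ->
  exists l : 'M[K]_(mdim X1, mdim X), is_hom l /\ l *m f = h.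
Proof.
move=> Hs Hext h hh.
have [hf hg _ _ _] := Hs.
have [sg [rh [gs rf spl gf]]] := ses_lin Hs.
pose c := fun a => h *m rh *m act X a *m sg.
have E1x : forall t (w : 'M[K]_(t, mdim X2)) a, w *m rh *m act X a *m f = w *m act X2 a.
  by move=> t w a; rewrite -mulmxA -hf mulmxA -(mulmxA w rh f) rf mulmx1.
have E2x : forall t (w : 'M[K]_(t, mdim X1)) b, w *m g *m act X b *m sg = w *m act X1 b.
  by move=> t w b; rewrite -(mulmxA w g) hg mulmxA -mulmxA gs mulmx1.
have clin : forall k a b, c (k *: a + b) = k *: c a + c b.
  by move=> k a b; rewrite /c act_linear mulmxDr -scalemxAr !mulmxDl -!scalemxAl.
have cmul : forall a b, c (a * b) = act X1 a *m c b + c a *m act X1 b.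
  move=> a b; rewrite /c act_mul.
  have -> : act X a *m act X b = act X a *m (f *m rh + sg *m g) *m act X b by rewrite spl mulmx1.
  rewrite mulmxDr mulmxDl !mulmxDr !mulmxDl !mulmxA E1x E2x hh.
  by [].

have [m Hm] := ext_cocycle Hext clin cmul.
exists (h *m rh - m *m g); split; last first.
  by rewrite mulmxBl -!mulmxA rf gf mulmx1 mulmx0 subr0.
move=> a.
have T : h *m rh *m act X a = act X1 a *m h *m rh + c a *m g.
  by rewrite -[h *m rh *m act X a]mulmx1 -spl mulmxDr !mulmxA E1x hh /c.
have Hc : c a = m *m act X1 a - act X1 a *m m by rewrite -Hm; zs.
rewrite mulmxBl T -(mulmxA m) hg mulmxA Hc mulmxBr mulmxBl !mulmxA; zs.
Qed.

Lemma subspace_basis N (P : 'rV[K]_N -> Prop) : P 0 ->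
  (forall k u v, P u -> P v -> P (k *: u + v)) ->
  exists H : 'M[K]_N, forall v, (v <= H)%MS <-> P v.
Proof.
move=> P0 Pl.
have Pc : forall (r : nat) (S : 'M[K]_N), (forall v, (v <= S)%MS -> P v) ->
    (N - \rank S <= r)%N -> exists H : 'M[K]_N, forall v, (v <= H)%MS <-> P v.
  elim => [|r IH] S HS Hr.
    case: (classic (forall v, P v -> (v <= S)%MS)) => [Hall | Hn].
      by exists S => v; split; [apply: HS | apply: Hall].
    have [v Hv] := not_all_ex_not _ _ Hn.
    have [Pv nvS'] := imply_to_and _ _ Hv.
    have nvS : ~~ (v <= S)%MS by apply/negP.
    case/negP: nvS; apply: submx_full; rewrite /row_full eqn_leq rank_leq_col /=.
    by move: Hr; rewrite leqn0 subn_eq0.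
  case: (classic (forall v, P v -> (v <= S)%MS)) => [Hall | Hn].
    by exists S => v; split; [apply: HS | apply: Hall].
  have [v Hv] := not_all_ex_not _ _ Hn.
    have [Pv nvS'] := imply_to_and _ _ Hv.
    have nvS : ~~ (v <= S)%MS by apply/negP.
  apply: (IH (S + v)%MS).
    move=> w /sub_addsmxP [[u1 u2] /= ->].
    rewrite [u2]mx11_scalar mul_scalar_mx addrC.
    apply: Pl => //; apply: HS; exact: submxMl.
  have lt : (\rank S < \rank (S + v)%MS)%N.
    apply: rank_ltmx; rewrite ltmxE addsmxSl /=; apply/negP => Hsv.
    by case/negP: nvS; apply: submx_trans Hsv; apply: addsmxSr.
  have := rank_leq_col (S + v)%MS; move: Hr lt; lia.
apply: (Pc N 0) => [v|]; last by rewrite leq_subr.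
by rewrite submx0 => /eqP ->.
Qed.

Lemma hom_space (X Y : fdmod A) : exists H : 'M[K]_(mdim Y * mdim X),
  forall h : 'M[K]_(mdim Y, mdim X), (mxvec h <= H)%MS <-> is_hom h.
Proof.
have P0 : (fun v : 'rV[K]_(mdim Y * mdim X) => is_hom (vec_mx v)) 0.
  by move=> a /=; rewrite linear0 mul0mx mulmx0.
have Pl : forall k (u v : 'rV[K]_(mdim Y * mdim X)), is_hom (vec_mx u) -> is_hom (vec_mx v) ->
    is_hom (vec_mx (k *: u + v)).
  by move=> k u v hu hv a; rewrite linearP /= mulmxDl mulmxDr -scalemxAl -scalemxAr hu hv.
have [H HH] := subspace_basis P0 Pl.
exists H => h; rewrite HH mxvecK; split=> //.
Qed.

Lemma homdim_rank (X Y : fdmod A) d (H : 'M[K]_(mdim Y * mdim X)) :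
  HomDim X Y d -> (forall h : 'M[K]_(mdim Y, mdim X), (mxvec h <= H)%MS <-> is_hom h) ->
  \rank H = d.
Proof.
move=> [F [Ffree HF]] HH.
have E : forall v : 'rV[K]_(mdim Y * mdim X), (v <= F)%MS = (v <= H)%MS.
  move=> v; apply/idP/idP; rewrite -[v]vec_mxK => Hv; [apply/HH/HF | apply/HF/HH] => //.
have FH : (F <= H)%MS by apply/row_subP => i; rewrite -E row_sub.
have HF' : (H <= F)%MS by apply/row_subP => i; rewrite E row_sub.
by rewrite -(eqP Ffree); apply/eqP; rewrite eqn_leq !mxrankS.
Qed.

Lemma count m1 n1 m2 n2 m3 n3 (Hs : 'M[K]_(m1 * n1)) (Ht : 'M[K]_(m2 * n2)) (Hk : 'M[K]_(m3 * n3))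
  (Ps : 'M[K]_(m1, n1) -> Prop) (Pt : 'M[K]_(m2, n2) -> Prop) (Pk : 'M[K]_(m3, n3) -> Prop)
  (F : 'M[K]_(m1, n1) -> 'M[K]_(m2, n2)) (J : 'M[K]_(m3, n3) -> 'M[K]_(m1, n1))
  (L : 'M[K]_(m1 * n1, m2 * n2)) (LJ : 'M[K]_(m3 * n3, m1 * n1)) :
  (forall x, mxvec x *m L = mxvec (F x)) -> (forall y, mxvec y *m LJ = mxvec (J y)) ->
  (forall x, (mxvec x <= Hs)%MS <-> Ps x) -> (forall x, (mxvec x <= Ht)%MS <-> Pt x) ->
  (forall x, (mxvec x <= Hk)%MS <-> Pk x) ->
  (forall x, Ps x -> Pt (F x)) ->
  (forall x, Ps x -> F x = 0 -> exists y, Pk y /\ x = J y) ->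
  (forall y, Pk y -> Ps (J y) /\ F (J y) = 0) ->
  (forall y, J y = 0 -> y = 0) ->
  [/\ \rank Hs = (\rank (Hs *m L) + \rank Hk)%N, (\rank (Hs *m L) <= \rank Ht)%N
    & (forall z, Pt z -> exists x, Ps x /\ F x = z) <-> \rank (Hs *m L) = \rank Ht].
Proof.
move=> HL HJ HS HT HK FPt Fker JP Jinj.
have sub_img : (Hs *m L <= Ht)%MS.
  apply/row_subP => i; rewrite row_mul -[row i Hs]vec_mxK HL; apply/HT/FPt/HS.
  by rewrite vec_mxK row_sub.
have k1 : (Hs :&: kermx L <= Hk *m LJ)%MS.
  apply/row_subP => i; set v := row i _.
  have : (v <= Hs :&: kermx L)%MS by apply: row_sub.
  rewrite sub_capmx => /andP [vS /sub_kermxP vK].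
  have Psx : Ps (vec_mx v) by apply/HS; rewrite vec_mxK.
  have F0 : F (vec_mx v) = 0.
    by apply/eqP; rewrite -mxvec_eq0 -HL vec_mxK vK.
  have [y [Pky Hy]] := Fker _ Psx F0.
  by rewrite -[v]vec_mxK Hy -HJ; apply: submxMr; apply/HK.
have k2 : (Hk *m LJ <= Hs :&: kermx L)%MS.
  apply/row_subP => i; rewrite row_mul -[row i Hk]vec_mxK HJ sub_capmx.
  have [P1 P2] : Ps (J (vec_mx (row i Hk))) /\ F (J (vec_mx (row i Hk))) = 0.
    by apply: JP; apply/HK; rewrite vec_mxK row_sub.
  apply/andP; split; first by apply/HS.
  by apply/sub_kermxP; rewrite HL P2 linear0.
have rk : \rank (Hk *m LJ) = \rank Hk.
  have := mxrank_mul_ker Hk LJ.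
  have -> : (Hk :&: kermx LJ)%MS = 0.
    apply/row_matrixP => i; rewrite row0.
    have : (row i (Hk :&: kermx LJ) <= kermx LJ)%MS.
      by apply: submx_trans (row_sub _ _) (capmxSr _ _).
    move/sub_kermxP; rewrite -[row i _]vec_mxK HJ => /eqP; rewrite mxvec_eq0 => /eqP/Jinj.
    by move/(congr1 mxvec); rewrite vec_mxK linear0.
  by rewrite mxrank0 addn0.
split.
- rewrite -{1}(mxrank_mul_ker Hs L) -rk; congr (_ + _)%N.
  by apply/eqP; rewrite eqn_leq !mxrankS.
- exact: mxrankS.
split.
- move=> Hsurj; apply/eqP; rewrite eqn_leq mxrankS //=; apply: mxrankS.
  apply/row_subP => i.
  have [x [Psx Fx]] : exists x, Ps x /\ F x = vec_mx (row i Ht).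
    by apply: Hsurj; apply/HT; rewrite vec_mxK row_sub.
  by rewrite -[row i Ht]vec_mxK -Fx -HL; apply: submxMr; apply/HS.
- move=> Hr z Pz.
  have : (Ht <= Hs *m L)%MS.
    by have := (mxrank_leqif_eq sub_img).2; rewrite Hr eqxx => /esym/andP [].
  move=> sub; have : (mxvec z <= Hs *m L)%MS by apply: submx_trans sub; apply/HT.
  case/submxP => D HD; exists (vec_mx (D *m Hs)); split.
    by apply/HS; rewrite vec_mxK submxMl.
  by apply: (can_inj mxvecK); rewrite -HL vec_mxK HD mulmxA.
Qed.

Lemma hom_mul (X Y Z : fdmod A) (u : 'M[K]_(mdim Z, mdim Y)) (v : 'M[K]_(mdim Y, mdim X)) :
  is_hom u -> is_hom v -> is_hom (u *m v).
Proof. by move=> hu hv a; rewrite -mulmxA hv mulmxA hu mulmxA. Qed.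

Lemma hom_one (X : fdmod A) : is_hom (1%:M : 'M[K]_(mdim X)).
Proof. by move=> a; rewrite mul1mx mulmx1. Qed.

Lemma hom_sub (X Y : fdmod A) (u v : 'M[K]_(mdim Y, mdim X)) :
  is_hom u -> is_hom v -> is_hom (u - v).
Proof. by move=> hu hv a; rewrite mulmxBl mulmxBr hu hv. Qed.

Lemma ker_left (X Y Z W : fdmod A) (f : 'M[K]_(mdim Y, mdim X)) (g : 'M[K]_(mdim Z, mdim Y)) :
  ses f g -> forall x : 'M[K]_(mdim Y, mdim W), is_hom x -> g *m x = 0 ->
  exists y : 'M[K]_(mdim X, mdim W), is_hom y /\ x = f *m y.
Proof.
move=> Hs x hx gx; have [hf hg _ _ _] := Hs.
have [sg [rh [gs rf spl gf]]] := ses_lin Hs.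
have Ex : x = f *m (rh *m x).
  by rewrite mulmxA -[x in LHS]mul1mx -spl mulmxDl -(mulmxA sg) gx mulmx0 addr0.
exists (rh *m x); split => // a.
set y := rh *m x in Ex *.
have : f *m (y *m act W a) = f *m (act X a *m y).
  by rewrite mulmxA -Ex hx Ex mulmxA -hf mulmxA.
by move/(congr1 (mulmx rh)); rewrite !mulmxA rf !mul1mx.
Qed.

Lemma ker_right (X Y Z W : fdmod A) (f : 'M[K]_(mdim Y, mdim X)) (g : 'M[K]_(mdim Z, mdim Y)) :
  ses f g -> forall x : 'M[K]_(mdim W, mdim Y), is_hom x -> x *m f = 0 ->
  exists y : 'M[K]_(mdim W, mdim Z), is_hom y /\ x = y *m g.
Proof.
move=> Hs x hx xf; have [hf hg _ _ _] := Hs.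
have [sg [rh [gs rf spl gf]]] := ses_lin Hs.
have Ex : x = x *m sg *m g.
  by rewrite -mulmxA -[x in LHS]mulmx1 -spl mulmxDr mulmxA xf mul0mx add0r.
exists (x *m sg); split => // a.
set y := x *m sg in Ex *.
have : y *m act Z a *m g = act W a *m y *m g.
  by rewrite -mulmxA -hg mulmxA -Ex hx Ex !mulmxA.
by move/(congr1 (mulmx^~ sg)); rewrite -!mulmxA gs !mulmx1.
Qed.
End Mods.
Ltac zs := apply/matrixP=> ? ?; rewrite !mxE; ring.

Theorem lemma6p2 (K : fieldType) (A : algType K) (x x1 x2 x3 : fdmod A)
    (f1 : 'M[K]_(mdim x, mdim x2)) (g1 : 'M[K]_(mdim x1, mdim x))
    (f2 : 'M[K]_(mdim x, mdim x1)) (g2 : 'M[K]_(mdim x3, mdim x)) :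
  ses f1 g1 -> ses f2 g2 ->
  Ext1_zero x1 x1 ->
  (exists d, HomDim x1 x2 d /\ HomDim x1 x3 d) ->
  (exists d, HomDim x2 x1 d /\ HomDim x3 x1 d) ->
  [/\ ses_splits f1 g1, ses_splits f2 g2 & mod_iso x2 x3].
Proof.
move=> S1 S2 Hext [d [D12 D13]] [d' [D21 D31]].
have [hf1 hg1 _ _ _] := S1; have [hf2 hg2 _ _ _] := S2.
have [sg1 [rh1 [gs1 rf1 spl1 gf1]]] := ses_lin S1.
have [sg2 [rh2 [gs2 rf2 spl2 gf2]]] := ses_lin S2.
have [H1x H1xP] := hom_space x1 x.
have [H11 H11P] := hom_space x1 x1.
have [H12 H12P] := hom_space x1 x2.
have [H13 H13P] := hom_space x1 x3.
have [Hx1 Hx1P] := hom_space x x1.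
have [H21 H21P] := hom_space x2 x1.
have [H31 H31P] := hom_space x3 x1.
have r12 := homdim_rank D12 H12P.
have r13 := homdim_rank D13 H13P.
have r21 := homdim_rank D21 H21P.
have r31 := homdim_rank D31 H31P.
have [s1 [hs1 g1s1]] : exists s1 : 'M[K]_(mdim x, mdim x1), is_hom s1 /\ g1 *m s1 = 1%:M.
  have HLA : forall X0 : 'M[K]_(mdim x, mdim x1), mxvec X0 *m lin_mx (mulmx g2) = mxvec (g2 *m X0).
    by move=> X0; rewrite mul_vec_lin.
  have HJA : forall Y0 : 'M[K]_(mdim x1, mdim x1), mxvec Y0 *m lin_mx (mulmx f2) = mxvec (f2 *m Y0).
    by move=> Y0; rewrite mul_vec_lin.
  have FPtA : forall X0 : 'M[K]_(mdim x, mdim x1), is_hom X0 -> is_hom (g2 *m X0).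
    by move=> X0 hX; apply: hom_mul.
  have FkerA : forall X0 : 'M[K]_(mdim x, mdim x1), is_hom X0 -> g2 *m X0 = 0 ->
      exists Y0 : 'M[K]_(mdim x1, mdim x1), is_hom Y0 /\ X0 = f2 *m Y0.
    by move=> X0 hX gX; apply: (ker_left S2).
  have JPA : forall Y0 : 'M[K]_(mdim x1, mdim x1), is_hom Y0 ->
      is_hom (f2 *m Y0) /\ g2 *m (f2 *m Y0) = 0.
    by move=> Y0 hY; split; [apply: hom_mul | rewrite mulmxA gf2 mul0mx].
  have JinjA : forall Y0 : 'M[K]_(mdim x1, mdim x1), f2 *m Y0 = 0 -> Y0 = 0.
    by move=> Y0 HY; rewrite -[Y0]mul1mx -rf2 -mulmxA HY mulmx0.
  have [CA1 CA2 CA3] := count HLA HJA H1xP H13P H11P FPtA FkerA JPA JinjA.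
  have rA := (proj1 CA3) (pull S2 Hext).
  have HLB : forall X0 : 'M[K]_(mdim x, mdim x1), mxvec X0 *m lin_mx (mulmx g1) = mxvec (g1 *m X0).
    by move=> X0; rewrite mul_vec_lin.
  have HJB : forall Y0 : 'M[K]_(mdim x2, mdim x1), mxvec Y0 *m lin_mx (mulmx f1) = mxvec (f1 *m Y0).
    by move=> Y0; rewrite mul_vec_lin.
  have FPtB : forall X0 : 'M[K]_(mdim x, mdim x1), is_hom X0 -> is_hom (g1 *m X0).
    by move=> X0 hX; apply: hom_mul.
  have FkerB : forall X0 : 'M[K]_(mdim x, mdim x1), is_hom X0 -> g1 *m X0 = 0 ->
      exists Y0 : 'M[K]_(mdim x2, mdim x1), is_hom Y0 /\ X0 = f1 *m Y0.
    by move=> X0 hX gX; apply: (ker_left S1).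
  have JPB : forall Y0 : 'M[K]_(mdim x2, mdim x1), is_hom Y0 ->
      is_hom (f1 *m Y0) /\ g1 *m (f1 *m Y0) = 0.
    by move=> Y0 hY; split; [apply: hom_mul | rewrite mulmxA gf1 mul0mx].
  have JinjB : forall Y0 : 'M[K]_(mdim x2, mdim x1), f1 *m Y0 = 0 -> Y0 = 0.
    by move=> Y0 HY; rewrite -[Y0]mul1mx -rf1 -mulmxA HY mulmx0.
  have [CB1 CB2 CB3] := count HLB HJB H1xP H11P H12P FPtB FkerB JPB JinjB.
  have rB : \rank (H1x *m lin_mx (mulmx g1)) = \rank H11.
    move: CA1 CB1; rewrite rA r13 r12; lia.
  have [s1 [hs1 Hs1]] := (proj2 CB3) rB 1%:M (hom_one x1).
  by exists s1.
have [r2 [hr2 r2f2]] : exists r2 : 'M[K]_(mdim x1, mdim x), is_hom r2 /\ r2 *m f2 = 1%:M.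
  have HLC : forall X0 : 'M[K]_(mdim x1, mdim x), mxvec X0 *m lin_mx (mulmxr f1) = mxvec (X0 *m f1).
    by move=> X0; rewrite mul_vec_lin.
  have HJC : forall Y0 : 'M[K]_(mdim x1, mdim x1), mxvec Y0 *m lin_mx (mulmxr g1) = mxvec (Y0 *m g1).
    by move=> Y0; rewrite mul_vec_lin.
  have FPtC : forall X0 : 'M[K]_(mdim x1, mdim x), is_hom X0 -> is_hom (X0 *m f1).
    by move=> X0 hX; apply: hom_mul.
  have FkerC : forall X0 : 'M[K]_(mdim x1, mdim x), is_hom X0 -> X0 *m f1 = 0 ->
      exists Y0 : 'M[K]_(mdim x1, mdim x1), is_hom Y0 /\ X0 = Y0 *m g1.
    by move=> X0 hX gX; apply: (ker_right S1).
  have JPC : forall Y0 : 'M[K]_(mdim x1, mdim x1), is_hom Y0 ->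
      is_hom (Y0 *m g1) /\ Y0 *m g1 *m f1 = 0.
    by move=> Y0 hY; split; [apply: hom_mul | rewrite -mulmxA gf1 mulmx0].
  have JinjC : forall Y0 : 'M[K]_(mdim x1, mdim x1), Y0 *m g1 = 0 -> Y0 = 0.
    by move=> Y0 HY; rewrite -[Y0]mulmx1 -gs1 mulmxA HY mul0mx.
  have [CC1 CC2 CC3] := count HLC HJC Hx1P H21P H11P FPtC FkerC JPC JinjC.
  have rC := (proj1 CC3) (push S1 Hext).
  have HLD : forall X0 : 'M[K]_(mdim x1, mdim x), mxvec X0 *m lin_mx (mulmxr f2) = mxvec (X0 *m f2).
    by move=> X0; rewrite mul_vec_lin.
  have HJD : forall Y0 : 'M[K]_(mdim x1, mdim x3), mxvec Y0 *m lin_mx (mulmxr g2) = mxvec (Y0 *m g2).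
    by move=> Y0; rewrite mul_vec_lin.
  have FPtD : forall X0 : 'M[K]_(mdim x1, mdim x), is_hom X0 -> is_hom (X0 *m f2).
    by move=> X0 hX; apply: hom_mul.
  have FkerD : forall X0 : 'M[K]_(mdim x1, mdim x), is_hom X0 -> X0 *m f2 = 0 ->
      exists Y0 : 'M[K]_(mdim x1, mdim x3), is_hom Y0 /\ X0 = Y0 *m g2.
    by move=> X0 hX gX; apply: (ker_right S2).
  have JPD : forall Y0 : 'M[K]_(mdim x1, mdim x3), is_hom Y0 ->
      is_hom (Y0 *m g2) /\ Y0 *m g2 *m f2 = 0.
    by move=> Y0 hY; split; [apply: hom_mul | rewrite -mulmxA gf2 mulmx0].
  have JinjD : forall Y0 : 'M[K]_(mdim x1, mdim x3), Y0 *m g2 = 0 -> Y0 = 0.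
    by move=> Y0 HY; rewrite -[Y0]mulmx1 -gs2 mulmxA HY mul0mx.
  have [CD1 CD2 CD3] := count HLD HJD Hx1P H11P H31P FPtD FkerD JPD JinjD.
  have rD : \rank (Hx1 *m lin_mx (mulmxr f2)) = \rank H11.
    move: CC1 CD1; rewrite rC r21 r31; lia.
  have [r2 [hr2 Hr2]] := (proj2 CD3) rD 1%:M (hom_one x1).
  by exists r2.
have f1rh1 : f1 *m rh1 = 1%:M - sg1 *m g1 by rewrite -spl1 addrK.
pose q1 := rh1 *m (1%:M - s1 *m g1).
have f1q1 : f1 *m q1 = 1%:M - s1 *m g1.
  rewrite /q1 mulmxA f1rh1 mulmxBl mul1mx mulmxBr mulmx1 !mulmxA -(mulmxA sg1 g1 s1) g1s1 mulmx1.
  zs.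
have hq1 : is_hom q1.
  move=> a.
  have : f1 *m (q1 *m act x a) = f1 *m (act x2 a *m q1).
    by rewrite mulmxA f1q1 (mulmxA f1) hf1 -mulmxA f1q1 (hom_sub (hom_one x) (hom_mul hs1 hg1)).
  by move/(congr1 (mulmx rh1)); rewrite !mulmxA rf1 !mul1mx.
have q1f1 : q1 *m f1 = 1%:M.
  have : f1 *m (q1 *m f1) = f1 *m 1%:M.
    by rewrite mulmxA f1q1 mulmxBl mul1mx -mulmxA gf1 mulmx0 subr0 mulmx1.
  by move/(congr1 (mulmx rh1)); rewrite !mulmxA rf1 !mul1mx.
have q1s1 : q1 *m s1 = 0.
  have : f1 *m (q1 *m s1) = f1 *m 0.
    by rewrite mulmxA f1q1 mulmxBl mul1mx -mulmxA g1s1 mulmx1 subrr mulmx0.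
  by move/(congr1 (mulmx rh1)); rewrite !mulmxA rf1 !mul1mx => H; exact: H.
have e12 : s1 *m g1 + f1 *m q1 = 1%:M by rewrite f1q1 addrC subrK.
pose s2 := (1%:M - f2 *m r2) *m sg2.
have g2s2 : g2 *m s2 = 1%:M.
  by rewrite /s2 mulmxA mulmxBr mulmx1 mulmxA gf2 mul0mx subr0 gs2.
have r2s2 : r2 *m s2 = 0.
  by rewrite /s2 mulmxA mulmxBr mulmx1 mulmxA r2f2 mul1mx subrr mul0mx.
have sg2g2 : sg2 *m g2 = 1%:M - f2 *m rh2 by rewrite -spl2 [f2 *m rh2 + _]addrC addrK.
have e13 : f2 *m r2 + s2 *m g2 = 1%:M.
  rewrite /s2 -mulmxA sg2g2 mulmxBl mul1mx mulmxBr mulmx1 !mulmxA (extm r2f2) mulmx1; zs.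
have hs2 : is_hom s2.
  move=> a.
  have hP : is_hom (1%:M - f2 *m r2) := hom_sub (hom_one x) (hom_mul hf2 hr2).
  have Dz : g2 *m (sg2 *m act x3 a - act x a *m sg2) = 0.
    by rewrite mulmxBr mulmxA gs2 mul1mx mulmxA hg2 -mulmxA gs2 mulmx1 subrr.
  have D0 : (1%:M - f2 *m r2) *m (sg2 *m act x3 a - act x a *m sg2) = 0.
    have ED : sg2 *m act x3 a - act x a *m sg2 =
        f2 *m (rh2 *m (sg2 *m act x3 a - act x a *m sg2)).
      by rewrite mulmxA -[LHS]mul1mx -spl2 mulmxDl -(mulmxA sg2) Dz mulmx0 addr0.
    by rewrite ED mulmxA mulmxBl mul1mx !mulmxA (extm r2f2) mulmx1 subrr.
  rewrite /s2 (mulmxA (act x a)) -hP -!mulmxA; apply/eqP; rewrite -subr_eq0 -mulmxBr D0.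
  by [].
clearbody q1 s2.
split; first by exists s1.
  by exists s2.
pose S := fun c : 'M[K]_(mdim x) => exists a, c = act x a.
have toH : forall e : 'M[K]_(mdim x), is_hom e -> hom S e.
  by move=> e he c [a ->]; exact: he.
have ofH : forall e : 'M[K]_(mdim x), hom S e -> is_hom e.
  by move=> e he a; exact: (he _ (ex_intro _ a erefl)).
have oe : orth (s1 *m g1) (f1 *m q1).
  split; rewrite -!mulmxE !mulmxA.
  - by rewrite (extm g1s1) mulmx1.
  - by rewrite (extm q1f1) mulmx1.
  - by rewrite (extm gf1) mulmx0 mul0mx.
  - by rewrite (extm q1s1) mulmx0 mul0mx.
have ofp : orth (f2 *m r2) (s2 *m g2).
  split; rewrite -!mulmxE !mulmxA.
  - by rewrite (extm r2f2) mulmx1.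
  - by rewrite (extm g2s2) mulmx1.
  - by rewrite (extm r2s2) mulmx0 mul0mx.
  - by rewrite (extm gf2) mulmx0 mul0mx.
have sm : s1 *m g1 + f1 *m q1 = f2 *m r2 + s2 *m g2 by rewrite e12 e13.
have eq : equiv S (s1 *m g1) (f2 *m r2).
  exists (f2 *m g1), (s1 *m r2); split; split; rewrite -?mulmxE ?mulmxA.
  - by apply/toH/hom_mul.
  - by apply/toH/hom_mul.
  - by rewrite (extm r2f2) mulmx1.
  - by rewrite (extm g1s1) mulmx1.
  - by rewrite (extm g1s1) mulmx1.
  - by rewrite (extm r2f2) mulmx1.
  - by rewrite (extm r2f2) mulmx1.
  - by rewrite (extm g1s1) mulmx1.
have [h [k [[hh hk f3h he2 e2k] [kf3 kh hk']]]] :=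
  IC (leqnn _) (toH _ (hom_mul hs1 hg1)) (toH _ (hom_mul hf1 hq1))
     (toH _ (hom_mul hf2 hr2)) (toH _ (hom_mul hs2 hg2)) oe ofp sm eq.
have he2' : h *m (f1 *m q1) = h := he2.
have kf3' : k *m (s2 *m g2) = k := kf3.
have kh' : k *m h = f1 *m q1 := kh.
have hk'' : h *m k = s2 *m g2 := hk'.
exists (g2 *m h *m f1), (q1 *m k *m s2); split.
- by apply: hom_mul => //; apply: hom_mul => //; apply: ofH.
- by apply: hom_mul => //; apply: hom_mul => //; apply: ofH.
- by rewrite !mulmxA (extm3 he2') (extm hk'') !mulmxA g2s2 mul1mx g2s2.
- by rewrite !mulmxA (extm3 kf3') (extm kh') !mulmxA q1f1 mul1mx q1f1.
Qed.
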